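(* Let $(X_1,Y_1),\dots,(X_k,Y_k)$ be i.i.d. random vectors in $\mathbb R^2$ whose common density $f$ satisfies $f\in L_\infty(\mathbb R^2)$, $\|f\|_{L_\infty(\mathbb R^2)}\le C_0$, and $f=0$ outside the disk $B((0,0),R)$, where $R,C_0>0$. For $(x,y)\in B((0,0),R)$ let $Z(x,y)=\min_{1\le j\le k}\sqrt{(X_j-x)^2+(Y_j-y)^2}$. Then $$\min_{(x,y)\in B((0,0),R)}\mathbf E\big(Z(x,y)\big)\ge\frac{1}{4\pi RC_0(k+1)}.$$
   Context: $B((0,0),R)$ denotes the closed Euclidean disk of radius $R$ centered at the origin. *)

(* Defs.v *)
From HB Require Import structures.
From mathcomp Require Import all_boot all_order all_algebra.
From mathcomp Require Import all_classical all_reals all_analysis.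
Set Implicit Arguments. Unset Strict Implicit. Unset Printing Implicit Defensive.
Import Order.TTheory GRing.Theory Num.Theory.
Local Open Scope classical_set_scope.
Local Open Scope ring_scope.

Definition leb2 (R : realType) : set (R * R) -> \bar R :=
  product_measure1 (@lebesgue_measure R) (@lebesgue_measure R).

Definition disk (R : realType) (rad : R) : set (R * R) :=
  [set p | p.1 ^+ 2 + p.2 ^+ 2 <= rad ^+ 2].

Definition rvec (T : Type) (R : realType) (k : nat)
  (X Y : 'I_k -> T -> R) (j : 'I_k) : T -> R * R :=
  fun w => (X j w, Y j w).

(* mutual independence of the random vectors V_j (j < k):
   product rule for every family of measurable sets (taking A_j = setT
   yields the product rule for every subfamily). *)
Definition mutually_independent (d : measure_display) (T : measurableType d)
  (R : realType) (P : probability T R) (k : nat) (V : 'I_k -> T -> R * R) :=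
  forall A : 'I_k -> set (R * R), (forall j, measurable (A j)) ->
    P (\bigcap_(j in [set: 'I_k]) (V j @^-1` A j)) =
    (\prod_(j < k) P (V j @^-1` A j))%E.

Definition has_density (d : measure_display) (T : measurableType d)
  (R : realType) (P : probability T R) (V : T -> R * R) (f : R * R -> R) :=
  forall A : set (R * R), measurable A ->
    P (V @^-1` A) = (\int[@leb2 R]_(p in A) (f p)%:E)%E.

Definition Zdist (T : Type) (R : realType) (k : nat) (X Y : 'I_k -> T -> R)
  (x y : R) : T -> \bar R :=
  fun w => (\big[Order.min/+oo%E]_(j < k)
              (Num.sqrt ((X j w - x) ^+ 2 + (Y j w - y) ^+ 2))%:E)%E.

(* Main.v *)
Require Import Defs.
From HB Require Import structures.
From mathcomp Require Import all_boot all_order all_algebra.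
From mathcomp Require Import all_classical all_reals all_analysis.
From mathcomp Require Import measurable_realfun.
From mathcomp Require Import ring lra.
Import Order.TTheory GRing.Theory Num.Theory.
Local Open Scope classical_set_scope.
Local Open Scope ring_scope.

Set Implicit Arguments. Unset Strict Implicit.
Local Open Scope ereal_scope.
Definition lebR2 (R : realType) : {measure set (measurableTypeR R * measurableTypeR R)%type -> \bar R} :=
  product_measure1 (@lebesgue_measure R) (@lebesgue_measure R).
HB.instance Definition _ (R : realType) := isMeasure.Build _ (R * R)%type R (@leb2 R)
  (measure0 (lebR2 R)) (measure_ge0 (lebR2 R)) (@measure_semi_sigma_additive _ _ _ (lebR2 R)).

Lemma dens_le (R : realType) (f : R * R -> R) (C0 : R) (S : set (R * R)) :
  (0 <= C0)%R -> measurable S -> measurable_fun setT f ->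
  {ae @leb2 R, forall p, (`|f p| <= C0)%R} ->
  \int[@leb2 R]_(p in S) (f p)%:E <= C0%:E * @leb2 R S.
Proof.
move=> C00 mS mf hae.
rewrite integralE.
have mfE : measurable_fun S (EFin \o f).
  by apply/measurable_EFinP; exact: measurable_funS mf.
apply: (@le_trans _ _ (\int[@leb2 R]_(p in S) ((fun p => (f p)%:E) ^\+ p))).
  rewrite -[X in _ <= X]sube0; apply: leeB => //.
  by apply: integral_ge0 => p _; exact: funeneg_ge0.
rewrite -integral_cst //.
apply: ae_ge0_le_integral => //.
- exact: measurable_funepos mfE.
- apply: filterS hae => p hp _ /=.
  rewrite funeposE ge_max /= !lee_fin C00 andbT.
  exact: le_trans (ler_norm _) hp.
Qed.

Lemma leb2_sq (R : realType) (a b c e : R) : (a < b)%R -> (c < e)%R ->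
  @leb2 R (`[a, b]%classic `*` `[c, e]%classic) = ((b - a) * (e - c))%:E.
Proof.
move=> ab ce.
have := product_measure1E (@lebesgue_measure R) (@lebesgue_measure R)
  (measurable_itv `[a, b]) (measurable_itv `[c, e]).
rewrite /leb2 => ->.
have e1 : forall u v : R, (u < v)%R ->
  @lebesgue_measure R (`[u, v]%classic : set (measurableTypeR R)) = (v - u)%:E.
  move=> u v uv; have := lebesgue_measure_itv `[u, v].
  by rewrite /= lte_fin uv EFinB.
by rewrite EFinM; congr (_ * _); apply: e1.
Qed.

Lemma sq_meas (R : realType) (a b c e : R) :
  measurable (`[a, b]%classic `*` `[c, e]%classic : set (R * R)).
Proof. by apply: measurableX; exact: measurable_itv. Qed.

Lemma rvec_meas (R : realType) (d : measure_display) (T : measurableType d)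
  (k : nat) (X Y : 'I_k -> T -> R) j (a b c e : R) :
  measurable_fun setT (X j) -> measurable_fun setT (Y j) ->
  measurable (rvec X Y j @^-1` (`[a, b]%classic `*` `[c, e]%classic)).
Proof.
move=> mX mY.
have -> : rvec X Y j @^-1` (`[a, b]%classic `*` `[c, e]%classic) =
  X j @^-1` `[a, b]%classic `&` Y j @^-1` `[c, e]%classic by [].
apply: measurableI.
- by rewrite -[X in measurable X]setTI; apply: mX => //; exact: measurable_itv.
- by rewrite -[X in measurable X]setTI; apply: mY => //; exact: measurable_itv.
Qed.

Local Close Scope ereal_scope.
Lemma prob_fin (R : realType) (d : measure_display) (T : measurableType d)
  (P : probability T R) (A : set T) : measurable A ->
  exists q : R, P A = q%:E /\ 0 <= q /\ q <= 1.
Proof.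
move=> mA; exists (fine (P A)).
have h1 := probability_le1 P mA.
have h0 : (0 <= P A)%E by [].
have fA : P A \is a fin_num by rewrite ge0_fin_numE // (le_lt_trans h1) // ltey.
by rewrite fineK // -lee_fin -lee_fin fineK.
Qed.

Lemma disk_sq (R : realType) (rad : R) (p : R * R) : (0 < rad)%R ->
  disk rad p -> (`[- rad, rad]%classic `*` `[- rad, rad]%classic) p.
Proof.
move=> r0; rewrite /disk /= !in_itv /= => h.
by split; apply/andP; split; nra.
Qed.

Lemma mass_bound (R : realType) (d : measure_display) (T : measurableType d)
  (P : probability T R) (k : nat) (X Y : 'I_k -> T -> R)
  (f : R * R -> R) (rad C0 : R) (j : 'I_k) :
  (0 < rad)%R -> (0 < C0)%R ->
  measurable_fun setT (X j) -> measurable_fun setT (Y j) ->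
  measurable_fun setT f ->
  {ae @leb2 R, forall p, (`|f p| <= C0)%R} ->
  (forall p, ~ disk rad p -> f p = 0) ->
  has_density P (rvec X Y j) f ->
  (1 <= C0 * ((rad - - rad) * (rad - - rad)))%R.
Proof.
move=> r0 C0p mX mY mf hae hf hd.
set S := (`[- rad, rad]%classic `*` `[- rad, rad]%classic : set (R * R)).
have mS : measurable S by exact: sq_meas.
have mVS := @rvec_meas R d T k X Y j (- rad) rad (- rad) rad mX mY.
have h0 : P (rvec X Y j @^-1` ~` S) = 0%E.
  rewrite hd; last exact: measurableC.
  apply: integral0_eq => p nS; rewrite hf //.
  by move=> /(disk_sq r0).
have [q [hq [q0 q1]]] := prob_fin P mVS.
move: h0; rewrite -preimage_setC probability_setC // hq -EFinB => -[] /eqP.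
rewrite subr_eq0 => /eqP q1E.
have := dens_le (ltW C0p) mS mf hae.
rewrite -hd // -/S hq -q1E leb2_sq; try lra.
by rewrite -EFinM lee_fin.
Qed.
Lemma arith (R : realType) (p r C n q x y : R) :
  2 <= p -> 0 < r -> 0 < C -> 1 <= n -> 1 <= C * ((r - - r) * (r - - r)) ->
  let b := (4 * p * r * C * (n + 1))^-1 in
  let t := 2 * b in
  q <= n * (C * ((x + t - (x - t)) * (y + t - (y - t)))) ->
  b <= t * (1 - q).
Proof.
move=> p2 r0 C0 n1 hM b t hq.
set u := 4 * p * r * C * (n + 1).
have u0 : 0 < u by rewrite /u; apply: mulr_gt0; [|lra]; apply: mulr_gt0 => //; apply: mulr_gt0 => //; lra.
have bu : b * u = 1 by rewrite /b mulVf // gt_eqF.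
have b0 : 0 < b by rewrite /b invr_gt0.
have hq' : q <= 16 * n * C * (b * b) by rewrite /t in hq; lra.
have pp : 4 <= p * p by nra.
have rc : 1 <= 4 * (r * r * C) by nra.
have k1 : 1 <= p * p * (r * r * C) by nra.
have k2 : 2 * n <= (n + 1) * (n + 1) by nra.
have k3 : 2 * n <= p * p * (r * r * C) * ((n + 1) * (n + 1)) by nra.
have uu : u * u = 16 * C * (p * p * (r * r * C) * ((n + 1) * (n + 1))) by rewrite /u; ring.
have k4 : 32 * n * C <= u * u by nra.
have k5 : 32 * n * C * (b * b) <= 1.
  have : 32 * n * C * (b * b) <= (u * u) * (b * b) by apply: ler_wpM2r; nra.
  have -> : u * u * (b * b) = (b * u) * (b * u) by ring.
  by rewrite bu mulr1.
rewrite /t; nra.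
Qed.

Lemma Z_ge (R : realType) (T : Type) (k : nat) (X Y : 'I_k -> T -> R) (x y t : R) (w : T) :
  0 <= t ->
  (forall j, ~ (rvec X Y j @^-1` (`[x - t, x + t]%classic `*` `[y - t, y + t]%classic)) w) ->
  (t%:E <= Zdist X Y x y w)%E.
Proof.
move=> t0 h; rewrite /Zdist; elim/big_ind: _ => //.
- exact: leey.
- by move=> a b ha hb; rewrite le_min ha hb.
move=> j _; rewrite lee_fin -(ger0_norm t0) -sqrtr_sqr ler_sqrt; last first.
  by apply: addr_ge0; exact: sqr_ge0.
have hj := h j; rewrite /rvec /= !in_itv /= in hj.
have : ~~ ((x - t <= X j w <= x + t) && (y - t <= Y j w <= y + t)).
  by apply/negP => /andP[a b]; apply: hj.
by rewrite negb_and !negb_and -!ltNge => /orP[/orP[]|/orP[]] ?; rewrite !expr2; have := sqr_ge0 (X j w - x); have := sqr_ge0 (Y j w - y); rewrite !expr2; nra.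
Qed.

Lemma Z_ge0 (R : realType) (T : Type) (k : nat) (X Y : 'I_k -> T -> R) (x y : R) (w : T) :
  (0 <= Zdist X Y x y w)%E.
Proof.
rewrite /Zdist; elim/big_ind: _ => //.
all: try by move=> a b ha hb; rewrite le_min ha hb.
all: by move=> j _; rewrite lee_fin sqrtr_ge0.
Qed.

Local Open Scope ereal_scope.
Lemma ge0_le_integral_nm (R : realType) (d : measure_display) (T : measurableType d)
  (mu : {measure set T -> \bar R}) (f1 f2 : T -> \bar R) :
  (forall x, 0 <= f1 x) -> (forall x, f1 x <= f2 x) ->
  \int[mu]_x f1 x <= \int[mu]_x f2 x.
Proof.
move=> f10 f12.
have f20 : forall x, 0 <= f2 x by move=> x; exact: le_trans (f10 x) (f12 x).
rewrite !ge0_integralE //.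
apply: ereal_sup_le => _ [h hf <-]; exists h => //= x.
apply: le_trans (hf x) _.
by rewrite /patch /=; case: ifP.
Qed.
Local Close Scope ereal_scope.

Unset Implicit Arguments.

Theorem mainTheorem13 (R : realType) (d : measure_display) (T : measurableType d)
  (P : probability T R) (k : nat) (X Y : 'I_k -> T -> R)
  (f : R * R -> R) (rad C0 : R) :
  (0 < k)%N -> 0 < rad -> 0 < C0 ->
  (forall j, measurable_fun setT (X j)) ->
  (forall j, measurable_fun setT (Y j)) ->
  measurable_fun setT f ->
  {ae @leb2 R, forall p, `|f p| <= C0} ->
  (forall p, ~ disk rad p -> f p = 0) ->
  (forall j, has_density P (rvec X Y j) f) ->
  mutually_independent P (rvec X Y) ->
  forall x y, disk rad (x, y) ->
    (((4 * pi * rad * C0 * (k.+1)%:R)^-1)%:E <= \int[P]_w Zdist X Y x y w)%E.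
Proof.
move=> k0 r0 C0p mX mY mf hae hf hd _ x y _.
case: k k0 X Y mX mY hd => [//|k] _ X Y mX mY hd.
have hM := @mass_bound R d T P k.+1 X Y f rad C0 ord0 r0 C0p (mX _) (mY _) mf hae hf (hd _).
set b := (4 * pi * rad * C0 * (k.+2)%:R)^-1.
have b0 : 0 < b.
  rewrite /b invr_gt0; apply: mulr_gt0 => //; apply: mulr_gt0 => //.
  apply: mulr_gt0 => //; apply: mulr_gt0 => //; exact: pi_gt0.
set t := 2 * b.
have tp : 0 < t by rewrite /t; lra.
have t0 := ltW tp.
pose B : nat -> set T := fun i =>
  rvec X Y (inord i) @^-1` (`[x - t, x + t]%classic `*` `[y - t, y + t]%classic).
have mB : forall i, measurable (B i) by move=> i; exact: rvec_meas.
pose G := \big[setU/set0]_(i < k.+1) B i.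
have mG : measurable G by apply: bigsetU_measurable => i _; exact: mB.
have hPB : forall i, (P (B i) <= (C0 * ((x + t - (x - t)) * (y + t - (y - t))))%:E)%E.
  move=> i; rewrite /B hd; last exact: sq_meas.
  have := @dens_le R f C0 _ (ltW C0p) (sq_meas (x - t) (x + t) (y - t) (y + t)) mf hae.
  rewrite leb2_sq; [by rewrite EFinM | lra | lra].
have hG : (P G <= (k.+1%:R * (C0 * ((x + t - (x - t)) * (y + t - (y - t)))))%:E)%E.
  apply: le_trans (Boole_inequality _ _) _; first by move=> i _; exact: mB.
  apply: le_trans; first by apply: lee_sum => i _; exact: hPB.
  by rewrite sumr_const card_ord mulr_natl EFin_natmul.
have [q [hq [q0 q1]]] := prob_fin P mG.
have hq' : q <= k.+1%:R * (C0 * ((x + t - (x - t)) * (y + t - (y - t)))).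
  by rewrite -lee_fin -hq.
have hI : (\int[P]_w ((cst t%:E) \_ (~` G)) w <= \int[P]_w Zdist X Y x y w)%E.
  apply: ge0_le_integral_nm.
    by move=> w; rewrite /patch; case: ifP => _ //; rewrite lee_fin.
  move=> w; rewrite /patch; case: ifP => [/set_mem nG | _]; last exact: Z_ge0.
  apply: Z_ge => // j hj; apply: nG.
  rewrite /G -bigcup_mkord; exists (val j); first by rewrite /= ltn_ord.
  by rewrite /B inord_val.
apply: le_trans hI.
rewrite -integral_mkcond integral_cst; last exact: measurableC.
  rewrite [X in (_ * X)%E](_ : _ = (1 - q)%:E); last first.
    by apply: eq_trans (probability_setC P mG) _; rewrite hq.
  rewrite -EFinM lee_fin.
  have e : (k.+2)%:R = k.+1%:R + 1 :> R by rewrite -addn1 natrD.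
  have H := @arith R pi rad C0 k.+1%:R q x y (@pi_ge2 R) r0 C0p.
  rewrite /= -e in H.
  by apply: H => //; rewrite ler1n.
Qed.
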